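(* Let $F$ be a field of characteristic $2$. Let $\mathcal G$ be the group with presentation $\langle y_1,y_2,\dots \mid y_i^2=1,\ ((y_i,y_j),y_k)=1\ (i,j,k\ge 1)\rangle$, where $(a,b)=a^{-1}b^{-1}ab$, and let $F\mathcal G$ be its group algebra. For $i,j\ge1$ put $d_{ij}=(y_i,y_j)+1\in F\mathcal G$, and let $I$ be the two-sided ideal of $F\mathcal G$ generated by all elements $d_{i_1i_2}d_{i_3i_4}+d_{i_1i_3}d_{i_2i_4}$ with $i_1,i_2,i_3,i_4\ge 1$. Let $\ell>0$ and let $i_1,i_2,\dots,i_{2\ell}$ be pairwise distinct positive integers. Then \[ \bigl((y_{i_1},y_{i_2})+1\bigr)\bigl((y_{i_3},y_{i_4})+1\bigr)\cdots\bigl((y_{i_{2\ell-1}},y_{i_{2\ell}})+1\bigr)\notin I. \] *)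

(* Defs.v *)
From HB Require Import structures.
From mathcomp Require Import all_boot all_algebra.
From Stdlib Require Import ClassicalEpsilon.
Set Implicit Arguments. Unset Strict Implicit. Unset Printing Implicit Defensive.
Import GRing.Theory.
Local Open Scope ring_scope.

Record grp := Grp {
  gT :> Type;
  gmul : gT -> gT -> gT;
  ginv : gT -> gT;
  gone : gT;
  gmulA : forall a b c, gmul a (gmul b c) = gmul (gmul a b) c;
  gmul1g : forall a, gmul gone a = a;
  gmulVg : forall a, gmul (ginv a) a = gone }.

Definition gcomm (G : grp) (a b : G) : G :=
  gmul (gmul (gmul (ginv a) (ginv b)) a) b.

(* the defining relations of the presentation, for a family of generators
   indexed by the positive integers (index 0 is ignored) *)
Definition rels (G : grp) (y : nat -> G) : Prop :=
  (forall i, (0 < i)%N -> gmul (y i) (y i) = gone G) /\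
  (forall i j k, (0 < i)%N -> (0 < j)%N -> (0 < k)%N ->
     gcomm (gcomm (y i) (y j)) (y k) = gone G).

Definition gword (G : grp) (y : nat -> G) (w : seq (nat * bool)) : G :=
  foldr (fun p acc => gmul (if p.2 then ginv (y p.1) else y p.1) acc) (gone G) w.

Definition is_presented_group (G : grp) (y : nat -> G) : Prop :=
  rels y /\
  (forall g : G, exists w : seq (nat * bool),
       all (fun p => (0 < p.1)%N) w /\ g = gword y w) /\
  (forall (H : grp) (h : nat -> H), rels h ->
     exists f : G -> H, (forall a b, f (gmul a b) = gmul (f a) (f b)) /\
                        (forall i, (0 < i)%N -> f (y i) = h i)).

(* ---------- the group algebra F G ----------
   An element of F G is represented by a finite formal sum
   sum_k c_k g_k, i.e. a list of pairs (c_k, g_k); two representatives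
   denote the same element iff they have the same coefficient function. *)
Definition gdec (G : grp) (a b : G) : bool :=
  if excluded_middle_informative (a = b) then true else false.

Definition fs (F : fieldType) (G : grp) := seq (F * G).

Definition fs_coef (F : fieldType) (G : grp) (x : fs F G) (z : G) : F :=
  \sum_(p <- x) (if gdec p.2 z then p.1 else 0).

Definition fs_eq (F : fieldType) (G : grp) (x x' : fs F G) : Prop :=
  forall z, fs_coef x z = fs_coef x' z.

Definition fs_add (F : fieldType) (G : grp) (x x' : fs F G) : fs F G := x ++ x'.

Definition fs_mul (F : fieldType) (G : grp) (x x' : fs F G) : fs F G :=
  [seq (p.1 * q.1, gmul p.2 q.2) | p <- x, q <- x'].

Definition fs_scale (F : fieldType) (G : grp) (c : F) (x : fs F G) : fs F G :=
  [seq (c * p.1, p.2) | p <- x].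

Definition fs_of (F : fieldType) (G : grp) (g : G) : fs F G := [:: (1, g)].

Definition fs_one (F : fieldType) (G : grp) : fs F G := fs_of F (gone G).

Definition dd (F : fieldType) (G : grp) (y : nat -> G) (i j : nat) : fs F G :=
  fs_add (fs_of F (gcomm (y i) (y j))) (fs_one F G).

Definition Igen (F : fieldType) (G : grp) (y : nat -> G)
    (i1 i2 i3 i4 : nat) : fs F G :=
  fs_add (fs_mul (dd F y i1 i2) (dd F y i3 i4))
         (fs_mul (dd F y i1 i3) (dd F y i2 i4)).

(* membership in the two-sided ideal I generated by all Igen with indices
   >= 1: x is an F-linear combination of elements g * r * h with g, h in G
   and r a generator (this is exactly the set of finite sums
   sum a_k r_k b_k, a_k, b_k in F G). *)
Definition in_I (F : fieldType) (G : grp) (y : nat -> G) (x : fs F G) : Prop :=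
  exists L : seq (F * G * (nat * nat * nat * nat) * G),
    all (fun t => [&& (0 < t.1.2.1.1.1)%N, (0 < t.1.2.1.1.2)%N,
                      (0 < t.1.2.1.2)%N & (0 < t.1.2.2)%N]) L /\
    fs_eq x (flatten [seq fs_scale t.1.1.1
               (fs_mul (fs_mul (fs_of F t.1.1.2)
                  (Igen F y t.1.2.1.1.1 t.1.2.1.1.2 t.1.2.1.2 t.1.2.2))
                  (fs_of F t.2)) | t <- L]).

(* the product d_{i_1 i_2} d_{i_3 i_4} ... d_{i_{2l-1} i_{2l}}, where the
   indices are given as idx 0, idx 1, ..., idx (2l-1) *)
Definition dprod (F : fieldType) (G : grp) (y : nat -> G) (idx : nat -> nat)
    (l : nat) : fs F G :=
  foldr (fun k acc => fs_mul (dd F y (idx k.*2) (idx k.*2.+1)) acc)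
        (fs_one F G) (iota 0 l).

(* Main.v *)
From HB Require Import structures.
From mathcomp Require Import all_boot all_algebra.
From mathcomp Require Import ring zify.
From Stdlib Require Import ClassicalEpsilon.
Require Import Defs.
Set Implicit Arguments. Unset Strict Implicit. Unset Printing Implicit Defensive.
Import GRing.Theory.
Local Open Scope ring_scope.

Definition W (n : nat) := {ffun 'I_n -> bool}.
Definition wadd n (u v : W n) : W n := [ffun i => u i (+) v i].
Definition w0 n : W n := [ffun => false].

Lemma waddC n (u v : W n) : wadd u v = wadd v u.
Proof. by apply/ffunP => i; rewrite !ffunE addbC. Qed.
Lemma waddA n (u v w : W n) : wadd u (wadd v w) = wadd (wadd u v) w.
Proof. by apply/ffunP => i; rewrite !ffunE addbA. Qed.
Lemma wadd0 n (u : W n) : wadd (w0 n) u = u.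
Proof. by apply/ffunP => i; rewrite !ffunE. Qed.
Lemma waddK n (u v : W n) : wadd u (wadd u v) = v.
Proof. by apply/ffunP => i; rewrite !ffunE addKb. Qed.
Lemma waddI n (u : W n) : wadd u u = w0 n.
Proof. by apply/ffunP => i; rewrite !ffunE addbb. Qed.
Lemma wadd_inj n (u : W n) : injective (wadd u).
Proof. by move=> a b /(congr1 (wadd u)); rewrite !waddK. Qed.

Definition Rt (F : fieldType) n := {ffun W n -> F}.
HB.instance Definition _ F n := GRing.Zmodule.copy (Rt F n) {ffun W n -> F}.

Definition rmul (F : fieldType) n (f g : Rt F n) : Rt F n :=
  [ffun S => \sum_T f T * g (wadd T S)].
Definition rone (F : fieldType) n : Rt F n := [ffun S => (S == w0 n)%:R].

Lemma rmulA (F : fieldType) n : associative (@rmul F n).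
Proof.
move=> f g h; apply/ffunP => S; rewrite !ffunE.
transitivity (\sum_U \sum_T f U * g (wadd U T) * h (wadd T S)).
  apply: eq_bigr => U _; rewrite ffunE big_distrr (reindex_inj (@wadd_inj _ U)) /=.
  apply: eq_bigr => T _; rewrite mulrA; congr (_ * h _).
  by apply/ffunP => i; rewrite !ffunE; by case: (U i); case: (T i); case: (S i).
under [RHS]eq_bigr => T _ do rewrite ffunE big_distrl.
by rewrite exchange_big.
Qed.

Lemma rmulC (F : fieldType) n : commutative (@rmul F n).
Proof.
move=> f g; apply/ffunP => S; rewrite !ffunE.
rewrite (reindex_inj (@wadd_inj _ S)) /=; apply: eq_bigr => T _.
by rewrite mulrC [wadd S T]waddC -waddA waddI waddC wadd0.
Qed.

Lemma rmul1 (F : fieldType) n : left_id (@rone F n) (@rmul F n).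
Proof.
move=> f; apply/ffunP => S; rewrite !ffunE (bigD1 (w0 n)) //= big1 ?addr0.
  by rewrite ffunE eqxx mul1r wadd0.
by move=> T /negbTE HT; rewrite ffunE HT mul0r.
Qed.

Lemma rmulDl (F : fieldType) n : left_distributive (@rmul F n) +%R.
Proof.
move=> f g h; apply/ffunP => S; rewrite !ffunE -big_split /=.
by apply: eq_bigr => T _; rewrite ffunE mulrDl.
Qed.

Lemma rone_neq0 (F : fieldType) n : @rone F n != 0.
Proof. by apply/eqP => /ffunP /(_ (w0 n)); rewrite !ffunE eqxx; apply/eqP; exact: oner_neq0. Qed.

HB.instance Definition _ F n := GRing.Zmodule_isComNzRing.Build (Rt F n)
  (@rmulA F n) (@rmulC F n) (@rmul1 F n) (@rmulDl F n) (@rone_neq0 F n).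

Lemma RmulE (F : fieldType) n (f g : Rt F n) S : (f * g) S = \sum_T f T * g (wadd T S).
Proof. by rewrite /GRing.mul /= ffunE. Qed.
Lemma RoneE (F : fieldType) n S : (1 : Rt F n) S = (S == w0 n)%:R.
Proof. by rewrite /GRing.one /= ffunE. Qed.
Lemma RaddE (F : fieldType) n (f g : Rt F n) S : (f + g) S = f S + g S.
Proof. by rewrite ffunE. Qed.


Definition del (F : fieldType) n (v : W n) : Rt F n := [ffun S => (S == v)%:R].
Lemma del0 (F : fieldType) n : del F (w0 n) = 1.
Proof. by apply/ffunP => S; rewrite RoneE. Qed.
Lemma delM_l (F : fieldType) n v (r : Rt F n) S : (del F v * r) S = r (wadd v S).
Proof.
rewrite RmulE (bigD1 v) //= big1 ?addr0; first by rewrite /del ffunE eqxx mul1r.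
by move=> T /negbTE HT; rewrite /del ffunE HT mul0r.
Qed.
Lemma delM (F : fieldType) n (u v : W n) : del F u * del F v = del F (wadd u v).
Proof.
apply/ffunP => S; rewrite delM_l !ffunE; congr (_%:R).
by rewrite (can2_eq (@waddK _ u) (@waddK _ u)).
Qed.
Lemma two_R (F : fieldType) n (H2 : 2%N \in [pchar F]) : (2%:R : Rt F n) = 0.
Proof.
apply/ffunP => S; rewrite mulr2n RaddE RoneE ffunE -mulr2n.
by rewrite -[_ *+ 2]mulr_natr (pcharf0 H2) mulr0.
Qed.
Lemma two_Rx (F : fieldType) n (H2 : 2%N \in [pchar F]) (x : Rt F n) : 2%:R * x = 0.
Proof. by rewrite two_R // mul0r. Qed.

Definition tau (F : fieldType) n (v : W n) : Rt F n := del F v + 1.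
Lemma tau2 (F : fieldType) n (H2 : 2%N \in [pchar F]) (v : W n) : tau F v * tau F v = 0.
Proof.
have -> : tau F v * tau F v = del F v * del F v + 1 + 2%:R * (del F v) by rewrite /tau; ring.
rewrite delM waddI del0.
have -> : (1 : Rt F n) + 1 + 2%:R * del F v = 2%:R * (1 + del F v) by ring.
by rewrite two_Rx.
Qed.
Lemma tau0 (F : fieldType) n (H2 : 2%N \in [pchar F]) : tau F (w0 n) = 0.
Proof. by rewrite /tau del0 -mulr2n -mulr_natl two_Rx. Qed.
Lemma tauM_l (F : fieldType) n v (r : Rt F n) S : (tau F v * r) S = r (wadd v S) + r S.
Proof. by rewrite /tau mulrDl mul1r RaddE delM_l. Qed.

Definition ee n (j : nat) : W n := [ffun i : 'I_n => (i : nat) == j].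

Lemma eval_prod (F : fieldType) n (H2 : 2%N \in [pchar F]) k m S : (m + k <= n)%N ->
  (foldr (fun j acc => tau F (ee n j) * acc) 1 (iota m k)) S =
  [forall i : 'I_n, S i ==> (m <= i < m + k)%N]%:R.
Proof.
elim: k m S => [|k IH] m S Hmk /=.
  rewrite RoneE; congr (_%:R); congr nat_of_bool; apply/idP/idP => [/eqP -> | /forallP H].
    by apply/forallP => i; rewrite /w0 ffunE.
  apply/eqP/ffunP => i; rewrite /w0 ffunE; move: (H i); case: (S i) => //=; lia.
rewrite tauM_l !IH; try lia.
have Hm : (m < n)%N by lia.
set om := Ordinal Hm.
have Hi' : forall i : 'I_n, i != om -> ((i : nat) == m) = false.
  by move=> i Hi; apply/negbTE; apply: contra Hi => /eqP Hi; apply/eqP/val_inj.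
case HS: (S om).
- have -> : [forall i : 'I_n, S i ==> (m.+1 <= i < m.+1 + k)%N] = false.
    apply/negbTE/negP => /forallP /(_ om); rewrite HS /=; lia.
  rewrite addr0; congr (_%:R); congr nat_of_bool; apply/forallP/forallP => H i; move: (H i); rewrite /wadd /ee !ffunE.
    case: (eqVneq i om) => [->|Hi]; first by rewrite HS /=; lia.
    rewrite Hi' //=; case: (S i) => //=; lia.
  case: (eqVneq i om) => [->|Hi]; first by rewrite HS /= eqxx.
  rewrite Hi' //=; case: (S i) => //= /andP [h1 h2]; apply/andP; split; try lia.
  by rewrite ltn_neqAle eq_sym Hi' // h1.
- have -> : [forall i : 'I_n, wadd (ee n m) S i ==> (m.+1 <= i < m.+1 + k)%N] = false.
    apply/negbTE/negP => /forallP /(_ om); rewrite /wadd /ee !ffunE HS /= eqxx /=; lia.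
  rewrite add0r; congr (_%:R); congr nat_of_bool; apply/forallP/forallP => H i; move: (H i).
    case: (eqVneq i om) => [->|Hi]; first by rewrite HS.
    case: (S i) => //=; lia.
  case: (eqVneq i om) => [->|Hi]; first by rewrite HS.
  case: (S i) => //= /andP [h1 h2]; apply/andP; split; try lia.
  by rewrite ltn_neqAle eq_sym Hi' // h1.
Qed.
Definition Qt n := {ffun 'I_n * 'I_n -> bool}.
Definition qadd n (u v : Qt n) : Qt n := [ffun i => u i (+) v i].
Definition q0 n : Qt n := [ffun => false].
Definition beta n (u v : W n) : Qt n := [ffun p => [&& u p.1, v p.2 & (p.1 < p.2)%N]].

Definition HT n := (W n * Qt n)%type.
Definition hmul n (x y : HT n) : HT n := (wadd x.1 y.1, qadd (qadd x.2 y.2) (beta x.1 y.1)).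
Definition hinv n (x : HT n) : HT n := (x.1, qadd x.2 (beta x.1 x.1)).
Definition hone n : HT n := (w0 n, q0 n).

Lemma hmulA n (a b c : HT n) : hmul a (hmul b c) = hmul (hmul a b) c.
Proof.
case: a => a qa; case: b => b qb; case: c => c qc; rewrite /hmul /=; congr (_, _).
  by apply/ffunP => i; rewrite /wadd !ffunE addbA.
apply/ffunP => -[i j]; rewrite /qadd /beta /wadd !ffunE /=.
by case: (a i); case: (b i); case: (b j); case: (c j); case: (i < j)%N; case: (qa _); case: (qb _); case: (qc _).
Qed.

Lemma hmul1 n (a : HT n) : hmul (hone n) a = a.
Proof.
case: a => a qa; rewrite /hmul /=; congr (_, _).
  by apply/ffunP => i; rewrite /wadd /w0 !ffunE.
by apply/ffunP => -[i j]; rewrite /qadd /beta /wadd /q0 /w0 !ffunE /= addbF.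
Qed.

Lemma hmulV n (a : HT n) : hmul (hinv a) a = hone n.
Proof.
case: a => a qa; rewrite /hmul /hinv /hone /=; congr (_, _).
  by apply/ffunP => i; rewrite /wadd /w0 !ffunE addbb.
apply/ffunP => -[i j]; rewrite /qadd /beta /wadd /q0 /w0 !ffunE /=.
by case: (a i); case: (a j); case: (i < j)%N; case: (qa _).
Qed.

Definition Hgrp n : grp := @Grp (HT n) (@hmul n) (@hinv n) (hone n) (@hmulA n) (@hmul1 n) (@hmulV n).

Lemma Hcomm_central n (a b c : Hgrp n) : gcomm (gcomm a b) c = gone (Hgrp n).
Proof.
case: a => a qa; case: b => b qb; case: c => c qc.
rewrite /gcomm /= /hmul /hinv /hone /=; congr (_, _).
  apply/ffunP => i; rewrite /wadd /w0 !ffunE.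
  by case: (a i); case: (b i); case: (c i).
apply/ffunP => -[i j]; rewrite /qadd /beta /wadd /q0 /w0 !ffunE /=.
by case: (a i); case: (a j); case: (b i); case: (b j); case: (c i); case: (c j); case: (i < j)%N; case: (qa _); case: (qb _); case: (qc _).
Qed.

Definition mu (F : fieldType) n (p : 'I_n * 'I_n) : Rt F n :=
  1 + tau F (ee n p.1) * tau F (ee n p.2).
Definition rho (F : fieldType) n (q : Qt n) : Rt F n :=
  \prod_(p : 'I_n * 'I_n) (if q p then mu F p else 1).

Lemma mu2 (F : fieldType) n (H2 : 2%N \in [pchar F]) p : mu F p * mu F p = 1 :> Rt F n.
Proof.
rewrite /mu.
have -> : forall x y : Rt F n, (1 + x * y) * (1 + x * y) = 1 + 2%:R * (x * y) + (x * x) * (y * y)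
  by move=> x y; ring.
by rewrite tau2 // mul0r addr0 two_Rx // addr0.
Qed.

Lemma rho_add (F : fieldType) n (H2 : 2%N \in [pchar F]) (q q' : Qt n) :
  rho F (qadd q q') = rho F q * rho F q'.
Proof.
rewrite /rho -big_split /=; apply: eq_bigr => p _; rewrite /qadd ffunE.
by case: (q p); case: (q' p); rewrite /= ?mulr1 ?mul1r ?mu2.
Qed.

Lemma rho0 (F : fieldType) n : rho F (q0 n) = 1.
Proof. by rewrite /rho big1 // => p _; rewrite /q0 ffunE. Qed.

Lemma rho_single (F : fieldType) n (q : Qt n) p0 :
  (forall p, q p = (p == p0)) -> rho F q = mu F p0.
Proof.
move=> Hq; rewrite /rho (bigD1 p0) //= Hq eqxx big1 ?mulr1 // => p /negbTE Hp.
by rewrite Hq Hp.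
Qed.

Definition vk n (idx : nat -> nat) (k : nat) : W n := [ffun i : 'I_n => idx i == k].
Definition zz n (u v : W n) : Qt n := qadd (beta u v) (beta v u).

Lemma vk_cases n (idx : nat -> nat) (Hinj : forall i j : 'I_n, idx i = idx j -> i = j) k :
  vk n idx k = w0 n \/ exists i : 'I_n, vk n idx k = ee n i.
Proof.
case: (pickP (fun i : 'I_n => idx i == k)) => [i /eqP Hi | H]; [right; exists i | left].
  apply/ffunP => j; rewrite /vk /ee !ffunE; apply/eqP/eqP => [Hj|/val_inj ->//].
  by congr nat_of_ord; apply: Hinj; rewrite Hj Hi.
by apply/ffunP => j; rewrite /vk /w0 !ffunE H.
Qed.

Lemma betaI n (idx : nat -> nat) (Hinj : forall i j : 'I_n, idx i = idx j -> i = j) k :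
  beta (vk n idx k) (vk n idx k) = q0 n.
Proof.
apply/ffunP => -[i j]; rewrite /beta /vk /q0 !ffunE /=.
case: (eqVneq (idx i) k) => [Hi|] //=; case: (eqVneq (idx j) k) => [Hj|] //=.
have E : i = j by apply: Hinj; rewrite Hi Hj.
by rewrite E ltnn.
Qed.

Lemma qaddC n (u v : Qt n) : qadd u v = qadd v u.
Proof. by apply/ffunP => i; rewrite !ffunE addbC. Qed.

Lemma key_nat (x y u v : nat) : (u < v)%N ->
  [&& x == u, y == v & (x < y)%N] (+) [&& x == v, y == u & (x < y)%N] = (x == u) && (y == v).
Proof.
move=> H; case: (x =P u) => ?; case: (y =P v) => ?; case: (x =P v) => ?; case: (y =P u) => ?;
  case: (ltnP x y) => ? /=; try done; exfalso; lia.
Qed.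

Lemma rho_zz (F : fieldType) n (H2 : 2%N \in [pchar F]) (idx : nat -> nat)
  (Hinj : forall i j : 'I_n, idx i = idx j -> i = j) a b :
  rho F (zz (vk n idx a) (vk n idx b)) = 1 + tau F (vk n idx a) * tau F (vk n idx b).
Proof.
case: (vk_cases Hinj a) => [->|[i ->]].
  rewrite tau0 // mul0r addr0 -(rho0 F n); congr rho.
  by apply/ffunP => -[x y]; rewrite /zz /qadd /beta /w0 /q0 !ffunE /= andbF.
case: (vk_cases Hinj b) => [->|[j ->]].
  rewrite tau0 // mulr0 addr0 -(rho0 F n); congr rho.
  by apply/ffunP => -[x y]; rewrite /zz /qadd /beta /w0 /q0 !ffunE /= andbF.
have ee_ord : forall (u x : 'I_n), ee n u x = (x == u).
  by move=> u x; rewrite /ee ffunE.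
have key : forall u v : 'I_n, (u < v)%N -> forall p, zz (ee n u) (ee n v) p = (p == (u, v)).
  move=> u v Huv [x y]; rewrite /zz /qadd /beta !ffunE /= xpair_eqE.
  exact: key_nat.
case: (ltngtP i j) => Hij.
- rewrite (@rho_single _ _ _ (i, j)); first by []. exact: key.
- rewrite /zz qaddC (@rho_single _ _ _ (j, i)); first by rewrite /mu /= mulrC. exact: key.
- have -> : i = j by apply/val_inj.
  rewrite tau2 // addr0 -(rho0 F n); congr rho.
  by apply/ffunP => p; rewrite /zz /qadd /q0 !ffunE addbb.
Qed.

Definition gen n (idx : nat -> nat) (k : nat) : Hgrp n := (vk n idx k, q0 n).

Lemma gen_rels n (idx : nat -> nat) (Hinj : forall i j : 'I_n, idx i = idx j -> i = j) :
  rels (gen n idx).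
Proof.
split.
- move=> i _ /=; rewrite /hmul /= betaI // waddI /hone; congr (_, _).
  by apply/ffunP => p; rewrite /qadd /q0 !ffunE.
- by move=> i j k _ _ _; exact: Hcomm_central.
Qed.

Lemma h_idem n (x : HT n) : hmul x x = x -> x = hone n.
Proof.
case: x => a q; rewrite /hmul /hone /= => -[/ffunP Ha /ffunP Hq].
have Ha0 : a = w0 n.
  by apply/ffunP => i; move: (Ha i); rewrite /wadd /w0 !ffunE; case: (a i).
subst a; congr (_, _); apply/ffunP => -[i j]; move: (Hq (i, j)).
by rewrite /qadd /beta /w0 /q0 !ffunE /=; case: (q _).
Qed.

Lemma h_inv n (u v : HT n) : hmul u v = hone n -> u = hinv v.
Proof.
case: u => a qa; case: v => b qb; rewrite /hmul /hone /hinv /= => -[/ffunP Ha /ffunP Hq].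
have Hab : a = b.
  by apply/ffunP => i; move: (Ha i); rewrite /wadd /w0 !ffunE; case: (a i); case: (b i).
subst a; congr (_, _); apply/ffunP => -[i j]; move: (Hq (i, j)).
by rewrite /qadd /beta /w0 /q0 !ffunE /=; case: (qa _); case: (qb _); case: (b i); case: (b j); case: (i < j)%N.
Qed.

Lemma f_one (G : grp) n (f : G -> HT n) (fM : forall a b, f (gmul a b) = hmul (f a) (f b)) :
  f (gone G) = hone n.
Proof. by apply: h_idem; rewrite -fM gmul1g. Qed.

Lemma f_inv (G : grp) n (f : G -> HT n) (fM : forall a b, f (gmul a b) = hmul (f a) (f b)) a :
  f (ginv a) = hinv (f a).
Proof. by apply: h_inv; rewrite -fM gmulVg (f_one fM). Qed.

Lemma f_comm (G : grp) n (f : G -> HT n) (fM : forall a b, f (gmul a b) = hmul (f a) (f b)) a b :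
  f (gcomm a b) = @gcomm (Hgrp n) (f a) (f b).
Proof. by rewrite /gcomm !fM !(f_inv fM). Qed.

Lemma gcomm_uv n (u v : W n) : beta u u = q0 n -> beta v v = q0 n ->
  @gcomm (Hgrp n) (u, q0 n) (v, q0 n) = (w0 n, zz u v).
Proof.
move=> /ffunP Hu /ffunP Hv; rewrite /gcomm /= /hmul /hinv /=; congr (_, _).
  by apply/ffunP => i; rewrite /wadd /w0 !ffunE; case: (u i); case: (v i).
apply/ffunP => -[i j]; move: (Hu (i, j)) (Hv (i, j)).
rewrite /zz /qadd /beta /wadd /q0 /w0 !ffunE /=.
by case: (u i); case: (u j); case: (v i); case: (v j); case: (i < j)%N.
Qed.

Lemma hmul_c n z1 z2 : hmul (w0 n, z1) (w0 n, z2) = (w0 n, qadd z1 z2).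
Proof.
rewrite /hmul /=; congr (_, _); first by apply/ffunP => i; rewrite /wadd /w0 !ffunE.
by apply/ffunP => -[i j]; rewrite /qadd /beta /w0 !ffunE /= addbF.
Qed.

Definition wfull n : W n := [ffun => true].
Definition lam (F : fieldType) n (r : Rt F n) : F := r (wfull n).
Definition psi (F : fieldType) n (x : HT n) : F :=
  if x.1 == w0 n then lam (rho F x.2) else 0.

Lemma lamD (F : fieldType) n (r s : Rt F n) : lam (r + s) = lam r + lam s.
Proof. by rewrite /lam RaddE. Qed.
Lemma lam0 (F : fieldType) n : lam (0 : Rt F n) = 0.
Proof. by rewrite /lam ffunE. Qed.
Lemma lam_sum (F : fieldType) n I (s : seq I) (r : I -> Rt F n) :
  lam (\sum_(i <- s) r i) = \sum_(i <- s) lam (r i).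
Proof. exact: (big_morph _ (@lamD F n) (@lam0 F n)). Qed.

Lemma psi_central (F : fieldType) n (H2 : 2%N \in [pchar F]) (u v : HT n) z :
  psi F (hmul (hmul u (w0 n, z)) v) =
  if wadd u.1 v.1 == w0 n then lam (rho F (qadd (qadd u.2 v.2) (beta u.1 v.1)) * rho F z) else 0.
Proof.
case: u => a qa; case: v => b qb; rewrite /psi /hmul /=.
have -> : wadd (wadd a (w0 n)) b = wadd a b.
  by apply/ffunP => i; rewrite /wadd /w0 !ffunE addbF.
case: eqP => // _; rewrite -rho_add //; congr (lam (rho F _)).
apply/ffunP => -[i j]; rewrite /qadd /beta /wadd /w0 !ffunE /=.
by case: (qa _); case: (qb _); case: (z _); case: (a i); case: (b j); case: (i < j)%N.
Qed.

Lemma gdecP (G : grp) (a b : G) : reflect (a = b) (gdec a b).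
Proof. by rewrite /gdec; case: excluded_middle_informative => H; constructor. Qed.

Lemma sum_coef0 (F : fieldType) (G : grp) (chi : G -> F) (s : fs F G) :
  (forall z, fs_coef s z = 0) -> \sum_(p <- s) p.1 * chi p.2 = 0.
Proof.
move: {2}(size s) (leqnn (size s)) => N; elim: N s => [|N IH] s.
  by rewrite leqn0 => /nilP -> _; rewrite big_nil.
case: s => [|p0 s'] Hs Hc; first by rewrite big_nil.
set s := p0 :: s'; set g := p0.2.
rewrite (bigID (fun q => gdec q.2 g)) /=.
have -> : \sum_(q <- s | gdec q.2 g) q.1 * chi q.2 = fs_coef s g * chi g.
  rewrite /fs_coef big_mkcond big_distrl /=; apply: eq_bigr => q _.
  by case: (gdecP q.2 g) => [->|]; rewrite ?mul0r.
rewrite Hc mul0r add0r -big_filter; apply: IH.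
  rewrite /s /= /g; case: (gdecP p0.2 p0.2) => //= _.
  rewrite size_filter; apply: leq_trans (count_size _ _) _; exact: Hs.
move=> z; rewrite /fs_coef big_filter.
case: (gdecP z g) => [->|Hz].
  by rewrite big1 // => q /negbTE ->.
transitivity (fs_coef s z); last exact: Hc.
rewrite /fs_coef [RHS](bigID (fun q => gdec q.2 g)) /= [X in _ = X + _]big1 ?add0r //.
by move=> q /gdecP ->; case: (gdecP g z) => // E; case: Hz.
Qed.

Lemma fs_eq_sum (F : fieldType) (G : grp) (chi : G -> F) (x x' : fs F G) :
  fs_eq x x' -> \sum_(p <- x) p.1 * chi p.2 = \sum_(p <- x') p.1 * chi p.2.
Proof.
move=> Heq; apply/eqP; rewrite -subr_eq0; apply/eqP.
have := @sum_coef0 F G chi (x ++ [seq (- q.1, q.2) | q <- x']).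
rewrite big_cat big_map /= .
have -> : \sum_(i <- x') - i.1 * chi i.2 = - \sum_(p <- x') p.1 * chi p.2.
  by rewrite -sumrN; apply: eq_bigr => q _; rewrite mulNr.
apply => z; rewrite /fs_coef big_cat big_map /=.
have -> : \sum_(q <- x') (if gdec q.2 z then - q.1 else 0) = - fs_coef x' z.
  by rewrite /fs_coef -sumrN; apply: eq_bigr => q _; case: (gdec _ _); rewrite ?oppr0.
by rewrite -/(fs_coef x z) Heq subrr.
Qed.

Definition cst (F : fieldType) n (c : F) : Rt F n := [ffun S => if S == w0 n then c else 0].

Lemma cstM_l (F : fieldType) n (c : F) (r : Rt F n) S : (cst n c * r) S = c * r S.
Proof.
rewrite RmulE (bigD1 (w0 n)) //= big1 ?addr0; first by rewrite /cst ffunE eqxx wadd0.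
by move=> T /negbTE HT; rewrite /cst ffunE HT mul0r.
Qed.
Lemma cstM (F : fieldType) n (a b : F) : cst n (a * b) = cst n a * cst n b.
Proof.
apply/ffunP => S; rewrite cstM_l /cst !ffunE.
by case: (S == w0 n); rewrite ?mulr0.
Qed.
Lemma cst1 (F : fieldType) n : cst n (1 : F) = 1.
Proof. by apply/ffunP => S; rewrite RoneE /cst ffunE; case: (S == w0 n). Qed.
Lemma lam_cst (F : fieldType) n (c : F) (r : Rt F n) : lam (cst n c * r) = c * lam r.
Proof. by rewrite /lam cstM_l. Qed.

Lemma eq_bigr_all (R : nmodType) I (s : seq I) (P : pred I) (F1 F2 : I -> R) :
  all P s -> (forall i, P i -> F1 i = F2 i) -> \sum_(i <- s) F1 i = \sum_(i <- s) F2 i.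
Proof.
elim: s => [|i s IH] /=; first by rewrite !big_nil.
by move=> /andP [Hi Hs] E; rewrite !big_cons E // IH.
Qed.

Lemma beta0l n (v : W n) : beta (w0 n) v = q0 n.
Proof. by apply/ffunP => p; rewrite /beta /w0 /q0 !ffunE. Qed.
Lemma qaddq0 n (q : Qt n) : qadd q (q0 n) = q.
Proof. by apply/ffunP => p; rewrite /qadd /q0 !ffunE addbF. Qed.

Definition Tr (F : fieldType) (G : grp) n (f : G -> HT n) (x : fs F G) : Rt F n :=
  \sum_(p <- x) cst n p.1 * rho F (f p.2).2.
Definition cen (F : fieldType) (G : grp) n (f : G -> HT n) (x : fs F G) : bool :=
  all (fun p => (f p.2).1 == w0 n) x.

Lemma Psi_Tr (F : fieldType) (G : grp) n (f : G -> HT n) (x : fs F G) :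
  cen f x -> \sum_(p <- x) p.1 * psi F (f p.2) = lam (Tr f x).
Proof.
rewrite /cen => Hc; rewrite /Tr lam_sum; apply: (eq_bigr_all Hc) => p /= Hp.
by rewrite /psi Hp lam_cst.
Qed.

Lemma Tr_mul (F : fieldType) (H2 : 2%N \in [pchar F]) (G : grp) n (f : G -> HT n)
  (fM : forall a b, f (gmul a b) = hmul (f a) (f b)) (x x' : fs F G) :
  cen f x -> cen f x' -> cen f (fs_mul x x') /\ Tr f (fs_mul x x') = Tr f x * Tr f x'.
Proof.
rewrite /cen => Hx Hx'; split.
  elim: x Hx => [|p x IH] //= /andP [Hp Hx]; rewrite all_cat IH // andbT all_map.
  apply: sub_all Hx' => q /= Hq; rewrite fM.
  move: Hp Hq; case: (f p.2) => a qa; case: (f q.2) => b qb /= /eqP -> /eqP ->.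
  by rewrite wadd0.
rewrite /Tr /fs_mul big_allpairs_dep /= big_distrl /=.
apply: (eq_bigr_all Hx) => p /= Hp; rewrite big_distrr /=; apply: (eq_bigr_all Hx') => q /= Hq.
rewrite fM cstM.
move: Hp Hq; case: (f p.2) => a qa; case: (f q.2) => b qb /= /eqP -> /eqP ->.
by rewrite beta0l qaddq0 rho_add // mulrACA.
Qed.

Lemma f_cy (G : grp) (y : nat -> G) n (idx : nat -> nat)
  (Hinj : forall i j : 'I_n, idx i = idx j -> i = j) (f : G -> HT n)
  (fM : forall a b, f (gmul a b) = hmul (f a) (f b))
  (fy : forall k, (0 < k)%N -> f (y k) = gen n idx k) a b :
  (0 < a)%N -> (0 < b)%N ->
  f (gcomm (y a) (y b)) = (w0 n, zz (vk n idx a) (vk n idx b)).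
Proof.
by move=> Ha Hb; rewrite (f_comm fM) !fy // gcomm_uv // betaI.
Qed.

Lemma Psi_gen (F : fieldType) (H2 : 2%N \in [pchar F]) (G : grp) (y : nat -> G) n
  (idx : nat -> nat) (Hinj : forall i j : 'I_n, idx i = idx j -> i = j) (f : G -> HT n)
  (fM : forall a b, f (gmul a b) = hmul (f a) (f b))
  (fy : forall k, (0 < k)%N -> f (y k) = gen n idx k) a b c d g h :
  (0 < a)%N -> (0 < b)%N -> (0 < c)%N -> (0 < d)%N ->
  \sum_(p <- fs_mul (fs_mul (fs_of F g) (Igen F y a b c d)) (fs_of F h)) p.1 * psi F (f p.2) = 0.
Proof.
move=> Ha Hb Hc Hd.
rewrite /Igen /fs_add /fs_mul /dd /fs_add /fs_of /fs_one /=.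
rewrite [@gcomm G]lock !big_cons big_nil !fM -lock.
rewrite !(f_cy Hinj fM fy) // (f_one fM) /hone !hmul_c !psi_central //.
case: (wadd _ _ == w0 n); last by rewrite !mulr0 !addr0.
rewrite !mul1r addr0 -!lamD -!mulrDr [@zz n]lock !rho_add // !rho0 -lock !rho_zz //.
set ta := tau F (vk n idx a); set tb := tau F (vk n idx b).
set tc := tau F (vk n idx c); set td := tau F (vk n idx d).
match goal with |- lam (_ * ?X) = 0 =>
  have -> : X = 2%:R * (4%:R + ta * tb + tc * td + ta * tc + tb * td + ta * tb * tc * td) by ring
end.
by rewrite two_Rx // mulr0 lam0.
Qed.

Lemma Tr_dd (F : fieldType) (H2 : 2%N \in [pchar F]) (G : grp) (y : nat -> G) n
  (idx : nat -> nat) (Hinj : forall i j : 'I_n, idx i = idx j -> i = j) (f : G -> HT n)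
  (fM : forall a b, f (gmul a b) = hmul (f a) (f b))
  (fy : forall k, (0 < k)%N -> f (y k) = gen n idx k) a b :
  (0 < a)%N -> (0 < b)%N ->
  cen f (dd F y a b) /\ Tr f (dd F y a b) = tau F (vk n idx a) * tau F (vk n idx b).
Proof.
move=> Ha Hb; rewrite /dd /fs_add /fs_of /fs_one /cen /Tr /=.
rewrite !big_cons big_nil /= (f_cy Hinj fM fy) // (f_one fM) /= eqxx; split => //.
rewrite cst1 !mul1r addr0 rho_zz // rho0.
have -> : forall x : Rt F n, 1 + x + 1 = x + 2%:R * 1 by move=> x; ring.
by rewrite two_Rx // addr0.
Qed.

Lemma Tr_dprod (F : fieldType) (H2 : 2%N \in [pchar F]) (G : grp) (y : nat -> G) n
  (idx : nat -> nat) (Hinj : forall i j : 'I_n, idx i = idx j -> i = j) (f : G -> HT n)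
  (fM : forall a b, f (gmul a b) = hmul (f a) (f b))
  (fy : forall k, (0 < k)%N -> f (y k) = gen n idx k) (js : seq nat) :
  all (fun k => (0 < idx k.*2)%N && (0 < idx k.*2.+1)%N) js ->
  cen f (foldr (fun k acc => fs_mul (dd F y (idx k.*2) (idx k.*2.+1)) acc) (fs_one F G) js) /\
  Tr f (foldr (fun k acc => fs_mul (dd F y (idx k.*2) (idx k.*2.+1)) acc) (fs_one F G) js) =
  foldr (fun k acc => tau F (vk n idx (idx k.*2)) * tau F (vk n idx (idx k.*2.+1)) * acc) 1 js.
Proof.
elim: js => [|k js IH] /=.
  move=> _; rewrite /fs_one /fs_of /cen /Tr /= (f_one fM) /= eqxx; split => //.
  by rewrite big_cons big_nil /= (f_one fM) cst1 mul1r addr0 rho0.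
move=> /andP [/andP [Ha Hb] Hjs].
have [c1 t1] := Tr_dd H2 Hinj fM fy Ha Hb.
have [c2 t2] := IH Hjs.
have [c3 t3] := Tr_mul H2 fM c1 c2.
by split => //; rewrite t3 t1 t2.
Qed.

Lemma vk_idx n (idx : nat -> nat)
  (Hd : forall k k', (k < n)%N -> (k' < n)%N -> idx k = idx k' -> k = k') j :
  (j < n)%N -> vk n idx (idx j) = ee n j.
Proof.
move=> Hj; apply/ffunP => i; rewrite /vk /ee !ffunE.
by apply/eqP/eqP => [E | ->] //; exact: Hd (ltn_ord i) Hj E.
Qed.

Lemma pairs_ee (F : fieldType) n (idx : nat -> nat)
  (Hv : forall j, (j < n)%N -> vk n idx (idx j) = ee n j) k m :
  ((m + k).*2 <= n)%N ->
  foldr (fun k acc => tau F (vk n idx (idx k.*2)) * tau F (vk n idx (idx k.*2.+1)) * acc) 1 (iota m k)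
  = foldr (fun j acc => tau F (ee n j) * acc) 1 (iota m.*2 k.*2).
Proof.
elim: k m => [|k IH] m H //=.
rewrite IH; last by move: H; rewrite -!addnn; lia.
rewrite !Hv ?mulrA //.
all: move: H; rewrite -!addnn; lia.
Qed.

Lemma sum_scale (F : fieldType) (G : grp) (chi : G -> F) c (x : fs F G) :
  \sum_(p <- fs_scale c x) p.1 * chi p.2 = c * \sum_(p <- x) p.1 * chi p.2.
Proof. by rewrite big_map big_distrr; apply: eq_bigr => p _; rewrite /= mulrA. Qed.

Unset Implicit Arguments.

Theorem corollary2p7 (F : fieldType) (H2 : 2%N \in [pchar F])
  (G : grp) (y : nat -> G) (HG : is_presented_group y)
  (l : nat) (hl : (0 < l)%N) (idx : nat -> nat)
  (hpos : forall k, (k < l.*2)%N -> (0 < idx k)%N)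
  (hdist : forall k k', (k < l.*2)%N -> (k' < l.*2)%N -> idx k = idx k' -> k = k') :
  ~ in_I y (dprod F y idx l).
Proof.
move=> [L [Hall Heq]].
have Hinj : forall i j : 'I_(l.*2), idx i = idx j -> i = j.
  by move=> i j E; apply/val_inj; exact: hdist (ltn_ord i) (ltn_ord j) E.
case: HG => _ [_ Huniv].
case: (Huniv (Hgrp l.*2) (gen l.*2 idx) (gen_rels Hinj)) => f [fM fy].
have := fs_eq_sum (fun g => psi F (f g)) Heq.
rewrite big_flatten big_map.
rewrite (eq_bigr_all (F2 := fun _ => 0) Hall); last first.
  move=> t /and4P [Ha Hb Hc Hd]; apply: (etrans (sum_scale (fun g => psi F (f g)) _ _)).
  by rewrite (Psi_gen H2 Hinj fM fy) // mulr0.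
rewrite big1_eq /dprod.
have Hjs : all (fun k => (0 < idx k.*2)%N && (0 < idx k.*2.+1)%N) (iota 0 l).
  apply/allP => k; rewrite mem_iota add0n => /andP [_ Hk].
  by rewrite !hpos //; rewrite -!addnn; lia.
have [c1 t1] := Tr_dprod H2 Hinj fM fy Hjs.
rewrite (Psi_Tr c1) t1 (pairs_ee F (vk_idx hdist)) ?add0n // double0.
rewrite /lam eval_prod //.
have -> : [forall i : 'I_(l.*2), wfull l.*2 i ==> (0 <= i < 0 + l.*2)%N] by apply/forallP => i; rewrite add0n ltn_ord implybT.
by move/eqP; rewrite oner_eq0.
Qed.
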